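(* Let $k\ge 3$, let $F$ be a field, let $\Phi$ be a subgroup of $F^*$ of order $k$ with generator $\varphi$, and suppose $(F,\Phi)$ is circular. Let $K$ be any extension field of $F$. Then $(K,\Phi)$ is circular (i.e. $|(\Phi a+b)\cap \Phi c|\le 2$ for all $a,b,c\in K^*$), and $\mathcal{O}_\varphi(K,k)=\mathcal{O}_\varphi(F,k)$.
   Context: Notation: $\mathbf{k}=\{1,\dots,k-1\}$, $\mathbf{k}_0=\{0,1,\dots,k-1\}$. For a field $F$ and a subgroup $\Phi\le F^*$ of order $k$, and $a,b\in F$, put $\Phi a+b=\{\lambda a+b:\lambda\in\Phi\}$. The pair $(F,\Phi)$ is called circular if $|(\Phi a+b)\cap\Phi c|\le 2$ for all $a,b,c\in F^*$. Fix a generator $\varphi$ of $\Phi$. A quadruple $(i,j\mid s,t)$ with $i,j,s,t\in\mathbf{k}$ and $i\neq s$ is an overlap (with respect to $\varphi$) if $\frac{\varphi^j-1}{\varphi^i-1}\in\Phi\cdot\frac{\varphi^t-1}{\varphi^s-1}$, equivalently if there is $\omega\in\mathbf{k}_0$ with $\varphi^\omega(\varphi^j-1)(\varphi^s-1)=(\varphi^i-1)(\varphi^t-1)$. The overlap is trivial if at least one of the congruences $i\equiv\pm j$, $j\equiv\pm t$, $t\equiv\pm s$, $s\equiv\pm i \pmod k$ holds, and nontrivial otherwise. $\mathcal{O}_\varphi(F,k)$ denotes the set of all nontrivial overlaps with respect to $\varphi$. *)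

(* Defs.v *)
From mathcomp Require Import all_boot all_order all_algebra.
Set Implicit Arguments. Unset Strict Implicit. Unset Printing Implicit Defensive.
Import GRing.Theory.
Local Open Scope ring_scope.

(* Phi = <phi> = {phi^0, ..., phi^(k-1)} (phi of multiplicative order k). *)
Definition Phi (R : fieldType) (phi : R) (k : nat) : seq R :=
  [seq phi ^+ i | i <- iota 0 k].

Definition Phi_aff (R : fieldType) (phi : R) (k : nat) (a b : R) : seq R :=
  [seq x * a + b | x <- Phi phi k].

Definition Phi_mul (R : fieldType) (phi : R) (k : nat) (c : R) : seq R :=
  [seq x * c | x <- Phi phi k].

Definition circular (R : fieldType) (phi : R) (k : nat) : Prop :=
  forall a b c : R, a != 0 -> b != 0 -> c != 0 ->
    (size (undup [seq x <- Phi_aff phi k a b | x \in Phi_mul phi k c]) <= 2)%N.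

Definition in_k (k i : nat) : bool := (0 < i < k)%N.

Definition overlap (R : fieldType) (phi : R) (k i j s t : nat) : Prop :=
  [/\ [&& in_k k i, in_k k j, in_k k s & in_k k t], i != s &
    (exists2 w : nat, (w < k)%N &
      (phi ^+ j - 1) / (phi ^+ i - 1) = phi ^+ w * ((phi ^+ t - 1) / (phi ^+ s - 1)))].

Definition cong_pm (k x y : nat) : bool :=
  (x == y %[mod k])%N || (x + y == 0 %[mod k])%N.

Definition trivial_quad (k i j s t : nat) : bool :=
  [|| cong_pm k i j, cong_pm k j t, cong_pm k t s | cong_pm k s i].

(* (i, j | s, t) belongs to O_phi(R, k) *)
Definition nontrivial_overlap (R : fieldType) (phi : R) (k i j s t : nat) : Prop :=
  overlap phi k i j s t /\ ~~ trivial_quad k i j s t.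

(* Main.v *)
Require Import Defs.
From mathcomp Require Import all_boot all_order all_algebra.
From mathcomp Require Import ring.
Local Open Scope ring_scope.
Import GRing.Theory.

Lemma three_undup (T : eqType) (s : seq T) : (2 < size (undup s))%N ->
  exists x y z, [/\ x \in s, y \in s & z \in s] /\ [/\ x != y, x != z & y != z].
Proof.
have U := undup_uniq s.
have M := mem_undup s.
case E: (undup s) U => [|x [|y [|z r]]] //= U _.
exists x, y, z; split; first by split; rewrite -mem_undup E !inE eqxx ?orbT.
rewrite /=.
move: U; rewrite !inE => /andP[/norP[-> /norP[-> _]] /andP[/norP[-> _] _]].
by [].
Qed.

Lemma undup_three (T : eqType) (s : seq T) x y z :
  x \in s -> y \in s -> z \in s -> x != y -> x != z -> y != z ->
  (2 < size (undup s))%N.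
Proof.
move=> hx hy hz xy xz yz.
have U : uniq [:: x; y; z] by rewrite /= !inE negb_or xy xz yz.
have S : {subset [:: x; y; z] <= undup s}.
  by move=> w; rewrite !inE mem_undup => /or3P[] /eqP->.
exact: (uniq_leq_size U S).
Qed.

Lemma Phi_map (F K : fieldType) (f : {rmorphism F -> K}) (phi : F) k :
  Phi (f phi) k = map f (Phi phi k).
Proof. by rewrite /Phi -map_comp; apply: eq_map => i; rewrite /= rmorphXn. Qed.

Lemma decomp (F K : fieldType) (f : {rmorphism F -> K}) (phi : F) k a b c x :
  x \in [seq x <- Phi_aff (f phi) k a b | x \in Phi_mul (f phi) k c] ->
  exists p q, [/\ p \in Phi phi k, q \in Phi phi k, x = f p * a + b & x = f q * c].
Proof.
rewrite mem_filter /Phi_mul /Phi_aff Phi_map => /andP[/mapP[q' /mapP[q hq ->] ->]].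
move=> /mapP[p' /mapP[p hp ->] e].
by exists p, q; split.
Qed.

Theorem lemma8 (k : nat) (F K : fieldType) (phi : F) (f : {rmorphism F -> K}) :
  (2 < k)%N -> k.-primitive_root phi -> circular phi k ->
  circular (f phi) k /\
  (forall i j s t : nat,
     nontrivial_overlap (f phi) k i j s t <-> nontrivial_overlap phi k i j s t).
Proof.
move=> k2 prim circ; split.
  move=> a b c a0 b0 c0; rewrite leqNgt; apply/negP.
  move=> /three_undup [x [y [z [[hx hy hz] [xy xz yz]]]]].
  have [p1 [q1 [hp1 hq1 ex1 ex1']]] := @decomp _ _ f phi k a b c _ hx.
  have [p2 [q2 [hp2 hq2 ex2 ex2']]] := @decomp _ _ f phi k a b c _ hy.
  have [p3 [q3 [hp3 hq3 ex3 ex3']]] := @decomp _ _ f phi k a b c _ hz.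
  have fq1 : f q1 = (f p1 * a + b) / c by rewrite -ex1 ex1' mulfK.
  have fq2 : f q2 = (f p2 * a + b) / c by rewrite -ex2 ex2' mulfK.
  have fq3 : f q3 = (f p3 * a + b) / c by rewrite -ex3 ex3' mulfK.
  have p12 : f p1 - f p2 != 0.
    by rewrite subr_eq0; apply: contraNneq xy => e; rewrite ex1 ex2 e.
  pose a' := (q1 - q2) / (p1 - p2).
  pose b' := q1 - p1 * a'.
  have fa : f a' = a / c.
    rewrite /a' fmorph_div !rmorphB fq1 fq2; field.
    by rewrite c0 /= subr_eq0 in p12 *.
  have fb : f b' = b / c.
    rewrite /b' rmorphB rmorphM fa fq1; field; exact: c0.
  have a'0 : a' != 0.
    by rewrite -(fmorph_eq0 f) fa mulf_neq0 ?invr_eq0.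
  have b'0 : b' != 0.
    by rewrite -(fmorph_eq0 f) fb mulf_neq0 ?invr_eq0.
  have H := circ a' b' 1 a'0 b'0 (oner_neq0 F).
  have mem : forall p q, p \in Phi phi k -> q \in Phi phi k ->
      f q = (f p * a + b) / c ->
      q \in [seq x <- Phi_aff phi k a' b' | x \in Phi_mul phi k 1].
    move=> p q hp hq fq; rewrite mem_filter; apply/andP; split.
      by apply/mapP; exists q; rewrite ?mulr1.
    apply/mapP; exists p => //; apply: (fmorph_inj f).
    rewrite rmorphD rmorphM fa fb fq; field; exact: c0.
  move: H; rewrite leqNgt => /negP; apply.
  apply: (@undup_three _ _ q1 q2 q3).
  - exact: (mem p1).
  - exact: (mem p2).
  - exact: (mem p3).
  - by apply: contraNneq xy => e; rewrite ex1' ex2' e.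
  - by apply: contraNneq xz => e; rewrite ex1' ex3' e.
  - by apply: contraNneq yz => e; rewrite ex2' ex3' e.
have key : forall j i, (f phi ^+ j - 1) / (f phi ^+ i - 1) =
    f ((phi ^+ j - 1) / (phi ^+ i - 1)).
  by move=> j i; rewrite fmorph_div !rmorphB !rmorphXn !rmorph1.
move=> i j s t; rewrite /nontrivial_overlap /overlap.
split=> [[[h1 h2 [w hw e]] h3]|[[h1 h2 [w hw e]] h3]]; split=> //; split=> //;
  exists w => //.
  apply: (fmorph_inj f); move: e; rewrite !key -rmorphXn -rmorphM; exact.
by rewrite !key -rmorphXn -rmorphM e.
Qed.
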